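(* Let $S=\mathcal{OR}_n$ and $\sigma\in S$. Then (i) $\sigma S=\{\tau\in S: J(\tau)\subseteq J(\sigma)\}$; (ii) $S\sigma=\{\tau\in S: I(\tau)\subseteq I(\sigma)\}$; (iii) if $\mathrm{rk}(\sigma)\ne m$, then $S\sigma S=\{\tau\in S:\mathrm{rk}(\tau)\le\mathrm{rk}(\sigma)\}$; if $\mathrm{rk}(\sigma)=m$, then $S\sigma S=\{\tau\in S:\mathrm{rk}(\tau)<m, \text{ or } \mathrm{rk}(\tau)=m \text{ and } \mathrm{tp}(\tau)=\mathrm{tp}(\sigma)\}$.
   Context: Let $m\ge 1$, $n=2m$, $\mathbf n=\{1,\dots,n\}$, $\theta(i)=n+1-i$, written $\bar i$. A proper subset $I\subset\mathbf n$ is admissible if $I\cap\theta(I)=\emptyset$; $\mathbf n$ and $\emptyset$ are also admissible. For an injective partial map $\sigma$ of $\mathbf n$, $I(\sigma)$ is its domain, $J(\sigma)$ its image, $\mathrm{rk}(\sigma)=|I(\sigma)|$; the product $\sigma\tau$ is composition of partial maps (apply $\tau$ first). $W=\{\sigma\in S_n:\sigma(\bar i)=\overline{\sigma(i)}\ \forall i\}$, $W'=\{\sigma\in W:|\sigma(\{1,\dots,m\})\cap\{m+1,\dots,n\}|\text{ even}\}$. An admissible $m$-subset is of type I if it contains an even number of elements $>m$, type II otherwise. $\mathcal{OR}_n$ consists of the injective partial maps $\sigma$ with: $\mathrm{rk}(\sigma)<m$ and $I(\sigma),J(\sigma)$ admissible; or $\mathrm{rk}(\sigma)=m$ and $I(\sigma),J(\sigma)$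 admissible of the same type; or $\sigma\in W'$. It is a monoid under composition. For $\mathrm{rk}(\sigma)=m$, $\mathrm{tp}(\sigma)$ denotes the type of $I(\sigma)$. *)

(* Defs.v *)
(* Points of n = 2m are encoded 0-indexed as 'I_(2*m):
   the paper's point k (1 <= k <= n) is the ordinal k-1. *)
From mathcomp Require Import all_boot.
Set Implicit Arguments. Unset Strict Implicit. Unset Printing Implicit Defensive.

Section OR.
Variable m : nat.
Local Notation n := (2 * m).

Definition pmapo := {ffun 'I_n -> option 'I_n}.

(* theta(i) = n+1-i in 1-indexed terms, i.e. n-1-i here *)
Definition theta (i : 'I_n) : 'I_n := rev_ord i.

Definition pinjective (s : pmapo) : bool :=
  [forall i, forall j, ((s i != None) && (s i == s j)) ==> (i == j)].

Definition dom (s : pmapo) : {set 'I_n} := [set i | s i != None].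
Definition pimage (s : pmapo) (A : {set 'I_n}) : {set 'I_n} :=
  [set j | [exists i in A, s i == Some j]].
Definition img (s : pmapo) : {set 'I_n} := pimage s setT.
Definition rk (s : pmapo) : nat := #|dom s|.

(* product s t : apply t first, then s *)
Definition pmcomp (s t : pmapo) : pmapo :=
  [ffun i => if t i is Some j then s j else None].

Definition admissible (A : {set 'I_n}) : bool :=
  (A == setT) || (A :&: (theta @: A) == set0).

(* elements > m (1-indexed) are the ordinals >= m *)
Definition upper : {set 'I_n} := [set i : 'I_n | m <= i].
Definition lower : {set 'I_n} := [set i : 'I_n | i < m].

Definition typeI (A : {set 'I_n}) : bool := ~~ odd #|A :&: upper|.
Definition tp (s : pmapo) : bool := typeI (dom s).

Definition inW (s : pmapo) : bool :=
  [forall i, s i != None] && pinjective s &&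
  [forall i, s (theta i) == omap theta (s i)].

Definition inW' (s : pmapo) : bool :=
  inW s && ~~ odd #|pimage s lower :&: upper|.

Definition inOR (s : pmapo) : bool :=
  pinjective s &&
  [|| [&& rk s < m, admissible (dom s) & admissible (img s)],
      [&& rk s == m, admissible (dom s), admissible (img s)
        & typeI (dom s) == typeI (img s)]
    | inW' s].

End OR.

(* Main.v *)
Require Import Defs.
From mathcomp Require Import all_boot zify.
Set Implicit Arguments. Unset Strict Implicit. Unset Printing Implicit Defensive.

Section Aux.
Variable m : nat.
Local Notation n := (2 * m).
Implicit Types s t : pmapo m.
Local Notation th := (@theta m).

Lemma pinjP s : reflect (forall i j k, s i = Some k -> s j = Some k -> i = j) (pinjective s).
Proof.
apply: (iffP idP).
- move=> /forallP H i j k Hi Hj; apply/eqP; move: (H i) => /forallP /(_ j) /implyP; apply; by rewrite Hi Hj eqxx.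
- move=> H; apply/forallP=> i; apply/forallP=> j; apply/implyP.
  case Ei: (s i) => [k|] //= /eqP Ej; apply/eqP; apply: (H i j k) => //; by rewrite -Ej.
Qed.

Lemma opt_ext (T : eqType) (o1 o2 : option T) : (forall x, o1 = Some x <-> o2 = Some x) -> o1 = o2.
Proof.
case: o1 => [a|]; case: o2 => [b|] // H.
- by have [->] := (proj1 (H a) erefl).
- by have := proj1 (H a) erefl.
- by have := proj2 (H b) erefl.
Qed.

Lemma pmcompE s t i : pmcomp s t i = if t i is Some j then s j else None.
Proof. by rewrite ffunE. Qed.

Lemma pmcomp_Some s t i k : pmcomp s t i = Some k <-> exists2 j, t i = Some j & s j = Some k.
Proof.
rewrite pmcompE; case: (t i) => [j|]; split => //.
- by move=> H; exists j.
- by case=> j' [->].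
- by case.
Qed.

Lemma pinj_comp s t : pinjective s -> pinjective t -> pinjective (pmcomp s t).
Proof.
move=> /pinjP Hs /pinjP Ht; apply/pinjP => i j k /pmcomp_Some [a Ha Hak] /pmcomp_Some [b Hb Hbk].
have eab := Hs _ _ _ Hak Hbk; subst b; exact: Ht Ha Hb.
Qed.

Definition pinv s : pmapo m := [ffun j => [pick i | s i == Some j]].

Lemma pinvP s i j : pinjective s -> (pinv s j = Some i <-> s i = Some j).
Proof.
move=> /pinjP H; rewrite ffunE; case: pickP => [i' /eqP Hi'|Hn]; split => //.
- by case=> <-.
- by move=> Hi; congr Some; apply: H Hi' Hi.
- by move=> Hi; move: (Hn i); rewrite Hi eqxx.
Qed.

Lemma pinv_inj s : pinjective (pinv s).
Proof.
apply/pinjP => i j k; rewrite !ffunE; case: pickP => // x /eqP Hx [<-].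
by case: pickP => // y /eqP Hy [Hyx]; move: Hx; rewrite -Hyx Hy => -[].
Qed.

Lemma pinvK s : pinjective s -> pinv (pinv s) = s.
Proof.
move=> Hs; apply/ffunP => i; apply: opt_ext => j.
by rewrite (pinvP _ _ (pinv_inj s)) (pinvP _ _ Hs).
Qed.

Lemma pinv_comp s t : pinjective s -> pinjective t ->
  pinv (pmcomp s t) = pmcomp (pinv t) (pinv s).
Proof.
move=> Hs Ht; apply/ffunP => k; apply: opt_ext => i.
rewrite (pinvP _ _ (pinj_comp Hs Ht)) !pmcomp_Some; split.
- by case=> j Hj Hk; exists j; [apply/pinvP | apply/pinvP].
- by case=> j /(pinvP _ _ Hs) Hj /(pinvP _ _ Ht) Hi; exists j.
Qed.

Lemma in_dom s i : (i \in dom s) = (s i != None).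
Proof. by rewrite inE. Qed.

Lemma in_pimage s (A : {set 'I_n}) j : (j \in pimage s A) = [exists i in A, s i == Some j].
Proof. by rewrite inE. Qed.

Lemma pimageP s (A : {set 'I_n}) j : reflect (exists2 i, i \in A & s i = Some j) (j \in pimage s A).
Proof.
rewrite in_pimage; apply: (iffP existsP).
- by case=> i /andP [Hi /eqP Hs]; exists i.
- by case=> i Hi Hs; exists i; rewrite Hi Hs eqxx.
Qed.

Definition tot s (i : 'I_n) := odflt i (s i).

Lemma pimage_imset s (A : {set 'I_n}) : pimage s A = tot s @: (A :&: dom s).
Proof.
apply/setP => j; apply/pimageP/imsetP.
- case=> i Hi Hs; exists i; first by rewrite inE Hi in_dom Hs.
  by rewrite /tot Hs.
- case=> i; rewrite inE in_dom => /andP [Hi]; rewrite /tot.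
  case Es: (s i) => [a|] // _ ->; by exists i.
Qed.

Lemma card_pimage s (A : {set 'I_n}) : pinjective s -> #|pimage s A| = #|A :&: dom s|.
Proof.
move=> /pinjP H; rewrite pimage_imset card_in_imset // => i j.
rewrite !inE /tot => /andP [_ Hi] /andP [_ Hj].
case Ha: (s i) Hi => [a|] // _; case Hb: (s j) Hj => [b|] // _ /= eab.
by subst b; apply: H Ha Hb.
Qed.

Lemma card_img s : pinjective s -> #|img s| = rk s.
Proof. by move=> H; rewrite /img card_pimage // setTI. Qed.

Lemma dom_pinv s : dom (pinv s) = img s.
Proof.
apply/setP => j; rewrite in_dom ffunE; apply/idP/pimageP.
- by case: pickP => // i /eqP Hi _; exists i.
- by case=> i _ Hi; case: pickP => // /(_ i); rewrite Hi eqxx.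
Qed.

Lemma img_pinv s : pinjective s -> img (pinv s) = dom s.
Proof.
move=> Hs; apply/setP => i; rewrite in_dom; apply/pimageP/idP.
- by case=> j _ /(pinvP _ _ Hs) ->.
- by case E: (s i) => [j|] // _; exists j => //; apply/pinvP.
Qed.

Lemma rk_pinv s : pinjective s -> rk (pinv s) = rk s.
Proof. by move=> H; rewrite /rk dom_pinv card_img. Qed.

Lemma pimage_comp s t (A : {set 'I_n}) : pimage (pmcomp s t) A = pimage s (pimage t A).
Proof.
apply/setP => k; apply/pimageP/pimageP.
- by case=> i Hi /pmcomp_Some [j Hj Hk]; exists j => //; apply/pimageP; exists i.
- by case=> j /pimageP [i Hi Hj] Hk; exists i => //; apply/pmcomp_Some; exists j.
Qed.

Lemma img_comp s t : img (pmcomp s t) = pimage s (img t).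
Proof. exact: pimage_comp. Qed.

Lemma dom_comp_sub s t : dom (pmcomp s t) \subset dom t.
Proof.
apply/subsetP => i; rewrite !in_dom pmcompE; by case: (t i).
Qed.

Lemma img_comp_sub s t : img (pmcomp s t) \subset img s.
Proof.
apply/subsetP => k; rewrite img_comp => /pimageP [j _ H]; apply/pimageP; by exists j.
Qed.

Lemma rk_comp_r s t : rk (pmcomp s t) <= rk t.
Proof. exact/subset_leq_card/dom_comp_sub. Qed.

Lemma rk_comp_l s t : pinjective s -> pinjective t -> rk (pmcomp s t) <= rk s.
Proof.
move=> Hs Ht; rewrite -card_img ?pinj_comp // -(card_img Hs).
exact/subset_leq_card/img_comp_sub.
Qed.

Lemma theta_val (i : 'I_n) : val (theta i) = n - i.+1.
Proof. by []. Qed.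

Lemma thetaK : involutive (@theta m).
Proof. exact: rev_ordK. Qed.

Lemma theta_inj : injective (@theta m).
Proof. exact: rev_ord_inj. Qed.

Lemma in_upper (i : 'I_n) : (i \in upper m) = (m <= i).
Proof. by rewrite inE. Qed.

Lemma in_lower (i : 'I_n) : (i \in lower m) = (i < m).
Proof. by rewrite inE. Qed.

Lemma upper_theta (i : 'I_n) : (m <= theta i) = ~~ (m <= i).
Proof. rewrite theta_val; have := ltn_ord i; lia. Qed.

Lemma adm_small (X : {set 'I_n}) : admissible X -> #|X| < n -> X :&: th @: X = set0.
Proof.
case/orP => [/eqP -> | /eqP //]; by rewrite cardsT card_ord ltnn.
Qed.

Lemma disj_adm (X : {set 'I_n}) : X :&: th @: X = set0 -> admissible X.
Proof. by move=> H; rewrite /admissible H eqxx orbT. Qed.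

Lemma disj_sub (X Y : {set 'I_n}) : X \subset Y -> Y :&: th @: Y = set0 -> X :&: th @: X = set0.
Proof.
move=> sXY H; apply/eqP; rewrite -subset0 -H; apply: setISS => //; exact: imsetS.
Qed.

Lemma disjP (X : {set 'I_n}) : reflect (forall i, i \in X -> theta i \notin X) (X :&: th @: X == set0).
Proof.
apply: (iffP eqP).
- move=> H i Hi; apply/negP => Ht; have : theta i \in X :&: th @: X by rewrite inE Ht imset_f.
  by rewrite H inE.
- move=> H; apply/setP => j; rewrite !inE; apply/negP => /andP [Hj /imsetP [i Hi Ej]].
  by move: (H i Hi); rewrite -Ej Hj.
Qed.

Lemma transv (X : {set 'I_n}) i : X :&: th @: X = set0 -> #|X| = m -> (theta i \in X) = (i \notin X).
Proof.
move=> H cX; case Hi: (i \in X) => /=.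
  have /disjP D : X :&: th @: X == set0 by rewrite H.
  by apply/negbTE/D; rewrite Hi.
have cU : #|X :|: th @: X| = n.
  rewrite cardsU H cards0 subn0 card_imset; last exact: theta_inj.
  by rewrite cX; lia.
have : i \in X :|: th @: X.
  have -> : X :|: th @: X = setT.
    by apply/eqP; rewrite eqEcard subsetT cardsT card_ord cU leqnn.
  by rewrite in_setT.
rewrite inE Hi /= => /imsetP [j Hj ->]; by rewrite thetaK.
Qed.

Lemma card_lower : #|lower m| = m.
Proof.
have le : m <= n by lia.
have -> : lower m = [set widen_ord le i | i : 'I_m].
  apply/setP => i; rewrite in_lower; apply/idP/imsetP.
  - move=> H; exists (Ordinal H) => //; exact: val_inj.
  - by case=> j _ ->; rewrite /= ltn_ord.
rewrite card_imset ?card_ord // => a b /(congr1 val) /= ab; exact: val_inj.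
Qed.

Lemma lower_disj : lower m :&: th @: lower m = set0.
Proof.
apply/eqP/disjP => i; rewrite !in_lower theta_val => Hi; lia.
Qed.


Lemma W_tot s : inW s -> forall i, s i != None.
Proof. by case/andP => /andP [/forallP H _] _. Qed.

Lemma W_inj s : inW s -> pinjective s.
Proof. by case/andP => /andP [_ H] _. Qed.

Lemma W_th s : inW s -> forall i, s (th i) = omap th (s i).
Proof. by case/andP => _ /forallP H i; apply/eqP. Qed.

Lemma tot_inj s : (forall i, s i != None) -> pinjective s -> injective (tot s).
Proof.
move=> Ht /pinjP Hi i j; rewrite /tot.
move: (Ht i) (Ht j); case Ei: (s i) => [a|] //; case Ej: (s j) => [b|] // _ _ /= eab.
by subst b; apply: Hi Ei Ej.
Qed.

Lemma pimage_tot s (X : {set 'I_n}) : (forall i, s i != None) -> pimage s X = tot s @: X.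
Proof.
move=> Ht; rewrite pimage_imset.
have -> // : X :&: dom s = X by apply/setP => i; rewrite inE in_dom Ht andbT.
Qed.

Lemma tot_th s i : inW s -> tot s (th i) = th (tot s i).
Proof.
move=> Hw; rewrite /tot (W_th Hw); move: (W_tot Hw i); by case: (s i).
Qed.

Lemma odd_card_upper (A : {set 'I_n}) :
  odd #|A :&: upper m| = \big[addb/false]_(x in A) (m <= x).
Proof.
have -> : #|A :&: upper m| = \sum_(x in A) ((m <= x) : nat).
  rewrite -sum1_card (eq_bigl (fun x => (x \in A) && (x \in upper m))); last first.
    by move=> x; rewrite inE.
  rewrite big_mkcondr /=; apply: eq_bigr => x _; rewrite in_upper; by case: (m <= x).
rewrite (big_morph odd oddD (erefl (odd 0))); apply: eq_bigr => x _; by case: (m <= x).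
Qed.

Lemma big_transv (R : Type) (idx : R) (op : Monoid.com_law idx) (X : {set 'I_n}) (g : 'I_n -> R) :
  X :&: th @: X = set0 -> #|X| = m -> (forall x, g (th x) = g x) ->
  \big[op/idx]_(x in X) g x = \big[op/idx]_(x in lower m) g x.
Proof.
move=> HX cX Hg.
rewrite (bigID (mem (lower m))) [RHS](bigID (mem X)) /=; congr (op _ _).
  by apply: eq_bigl => x; rewrite andbC.
rewrite (reindex_inj theta_inj); apply: eq_big => x; last by move=> _; apply: Hg.
rewrite transv // !in_lower theta_val.
have -> : (n - x.+1 < m) = ~~ (x < m) by have := ltn_ord x; lia.
by rewrite negbK andbC.
Qed.

Lemma xorb_lem (a b c : bool) : a (+) b = c -> a = b (+) c.
Proof. by case: a; case: b; case: c. Qed.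

Lemma HL s (X : {set 'I_n}) : inW s -> X :&: th @: X = set0 -> #|X| = m ->
  odd #|pimage s X :&: upper m| = odd #|X :&: upper m| (+) odd #|pimage s (lower m) :&: upper m|.
Proof.
move=> Hw HX cX.
have Hinj := tot_inj (W_tot Hw) (W_inj Hw).
rewrite !odd_card_upper !pimage_tot; try exact: (W_tot Hw).
rewrite !big_imset; try by move=> a b _ _; apply: Hinj.
apply: xorb_lem; rewrite -big_split /=.
rewrite (@big_transv _ _ _ X (fun x => (m <= tot s x) (+) (m <= x))) //; last first.
  by move=> x /=; rewrite tot_th // !upper_theta; case: (m <= _); case: (m <= _).
rewrite big_split /= [X in _ (+) X]big1 ?addbF // => x; rewrite in_lower; lia.
Qed.

Lemma W_disj s (X : {set 'I_n}) : inW s -> X :&: th @: X = set0 ->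
  pimage s X :&: (th @: pimage s X) = set0.
Proof.
move=> Hw HX; have /disjP D : X :&: th @: X == set0 by rewrite HX.
apply/eqP/disjP; rewrite pimage_tot; last exact: W_tot.
move=> y /imsetP [x Hx ->]; apply/negP => /imsetP [x' Hx'].
rewrite -tot_th // => /(tot_inj (W_tot Hw) (W_inj Hw)) E.
by move: (D x Hx); rewrite E Hx'.
Qed.

Lemma card_pimage_W s (X : {set 'I_n}) : inW s -> #|pimage s X| = #|X|.
Proof.
move=> Hw; rewrite card_pimage ?(W_inj Hw) //.
have -> // : X :&: dom s = X by apply/setP => i; rewrite inE in_dom (W_tot Hw) andbT.
Qed.


Lemma mkW s : (forall i, s i != None) -> pinjective s ->
  (forall i, s (th i) = omap th (s i)) -> inW s.
Proof.
move=> H1 H2 H3; rewrite /inW H2 andbT; apply/andP; split; apply/forallP => // i.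
by rewrite H3.
Qed.

Lemma W_dom s : inW s -> dom s = setT.
Proof. by move=> Hw; apply/setP => i; rewrite in_dom (W_tot Hw) in_setT. Qed.

Lemma W_rk s : inW s -> rk s = n.
Proof. by move=> Hw; rewrite /rk W_dom // cardsT card_ord. Qed.

Lemma W_img s : inW s -> img s = setT.
Proof.
move=> Hw; apply/eqP; rewrite eqEcard subsetT cardsT card_ord card_img ?(W_inj Hw) //.
by rewrite W_rk // leqnn.
Qed.

Lemma odd_lower : odd #|lower m :&: upper m| = false.
Proof. rewrite odd_card_upper big1 // => x; rewrite in_lower; lia. Qed.

Lemma transv_image s : inW s -> (pimage s (lower m) :&: (th @: pimage s (lower m)) = set0) /\ (#|pimage s (lower m)| = m).
Proof.
move=> Hw; split; first exact: W_disj Hw lower_disj.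
by rewrite card_pimage_W // card_lower.
Qed.

Lemma W'_W s : inW' s -> inW s.
Proof. by case/andP. Qed.

Lemma W'_par s : inW' s -> odd #|pimage s (lower m) :&: upper m| = false.
Proof. by case/andP => _ /negbTE. Qed.

Lemma W'_comp s t : inW' s -> inW' t -> inW' (pmcomp s t).
Proof.
move=> Hs Ht; have Ws := W'_W Hs; have Wt := W'_W Ht.
have Wc : inW (pmcomp s t).
  apply: mkW; last 1 first.
  - move=> i; rewrite !pmcompE (W_th Wt); move: (W_tot Wt i); case: (t i) => //= j _.
    exact: W_th.
  - move=> i; rewrite pmcompE; move: (W_tot Wt i); case: (t i) => // j _; exact: W_tot.
  - exact: pinj_comp (W_inj Ws) (W_inj Wt).
rewrite /inW' Wc /= pimage_comp; have [D C] := transv_image Wt.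
by rewrite HL // (W'_par Hs) (W'_par Ht).
Qed.

Definition idm : pmapo m := [ffun i => Some i].

Lemma idm_W' : inW' idm.
Proof.
have Wi : inW idm.
  apply: mkW => [i|| i]; rewrite ?ffunE //.
  by apply/pinjP => i j k; rewrite !ffunE => -[->] [->].
rewrite /inW' Wi /=.
have -> : pimage idm (lower m) = lower m.
  apply/setP => j; apply/pimageP/idP; first by case=> i Hi; rewrite ffunE => -[<-].
  by move=> Hj; exists j; rewrite ?ffunE.
by rewrite odd_lower.
Qed.

Lemma comp_idm s : pmcomp s idm = s.
Proof. by apply/ffunP => i; rewrite pmcompE ffunE. Qed.

Lemma W'_pinv s : inW' s -> inW' (pinv s).
Proof.
move=> Hs; have Ws := W'_W Hs; have Is := W_inj Ws.
have Tp : forall j, pinv s j != None.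
  by move=> j; rewrite -in_dom dom_pinv W_img // in_setT.
have Wp : inW (pinv s).
  apply: mkW => //; first exact: pinv_inj.
  move=> j; move: (Tp j); case E: (pinv s j) => [i|] // _ /=.
  apply/pinvP => //; move/(pinvP _ _ Is): E => E.
  by rewrite (W_th Ws) E.
rewrite /inW' Wp /=; have [D C] := transv_image Wp.
have := HL Ws D C.
have -> : pimage s (pimage (pinv s) (lower m)) = lower m.
  rewrite -pimage_comp; apply/setP => j; apply/pimageP/idP.
  - case=> i Hi /pmcomp_Some [k /(pinvP _ _ Is) H1 H2]; by move: H1; rewrite H2 => -[->].
  - move=> Hj; exists j => //; apply/pmcomp_Some; move: (Tp j).
    case E: (pinv s j) => [k|] // _; exists k => //; exact/(pinvP _ _ Is).
by rewrite odd_lower (W'_par Hs) addbF => <-.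
Qed.


Definition SM s := [/\ rk s <= m, dom s :&: th @: dom s = set0,
   img s :&: th @: img s = set0 & (rk s = m -> typeI (dom s) = typeI (img s))].

Lemma inOR_cases s : 0 < m -> inOR s -> pinjective s /\ (inW' s \/ SM s).
Proof.
move=> m0 /andP [Hi H]; split => //.
have cd : forall x, x <= m -> x < n by move=> x; lia.
case/or3P: H => [/and3P [r a1 a2] | /and4P [/eqP r a1 a2 /eqP t] | ]; [right | right | by left].
- split; first exact: ltnW.
  + by apply: adm_small => //; apply: cd; apply: ltnW.
  + by apply: adm_small => //; rewrite card_img //; apply: cd; apply: ltnW.
  + by move=> e; move: r; rewrite e ltnn.
- split; first by rewrite r.
  + by apply: adm_small => //; apply: cd; rewrite /rk in r; rewrite r.
  + by apply: adm_small => //; rewrite card_img // r; apply: cd.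
  + by [].
Qed.

Lemma SM_inOR s : pinjective s -> SM s -> inOR s.
Proof.
move=> Hi [r d1 d2 t]; rewrite /inOR Hi andTb.
have a1 := disj_adm d1; have a2 := disj_adm d2.
case: (ltngtP (rk s) m) => e.
- by rewrite a1 a2.
- by move: r; rewrite leqNgt e.
- by rewrite a1 a2 (t e) eqxx orbT.
Qed.

Lemma W'_inOR s : inW' s -> inOR s.
Proof. by move=> H; rewrite /inOR H (W_inj (W'_W H)) !orbT. Qed.


Lemma inOR_pinv s : 0 < m -> inOR s -> inOR (pinv s).
Proof.
move=> m0 /(inOR_cases m0) [Hi [Hw | [r d1 d2 t]]].
  exact/W'_inOR/W'_pinv.
apply: SM_inOR; first exact: pinv_inj.
split; rewrite ?rk_pinv ?dom_pinv ?img_pinv //.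
by move=> e; rewrite (t e).
Qed.

Lemma dom_comp_tot s t : (forall i, s i != None) -> dom (pmcomp s t) = dom t.
Proof.
move=> H; apply/setP => i; rewrite !in_dom pmcompE; case: (t i) => // j; exact: H.
Qed.

Lemma typeI_W' s (X : {set 'I_n}) : inW' s -> X :&: th @: X = set0 -> #|X| = m ->
  typeI (pimage s X) = typeI X.
Proof.
move=> Hs HX cX; rewrite /typeI HL ?(W'_W Hs) // (W'_par Hs) addbF //.
Qed.

Lemma closure_W'l s t : 0 < m -> inW' s -> inOR t -> inOR (pmcomp s t).
Proof.
move=> m0 Hs /(inOR_cases m0) [Hi [Ht | [r d1 d2 tt]]].
  exact/W'_inOR/W'_comp.
have Ws := W'_W Hs.
have Hc := pinj_comp (W_inj Ws) Hi.
have Ed := dom_comp_tot t (W_tot Ws).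
have Er : rk (pmcomp s t) = rk t by rewrite /rk Ed.
apply: SM_inOR => //; split; rewrite ?Er ?Ed ?img_comp //.
  exact: W_disj.
move=> e; rewrite tt // typeI_W' // card_img //.
Qed.

Lemma sub_eq_card (A B : {set 'I_n}) : A \subset B -> #|B| <= #|A| -> A = B.
Proof. by move=> H1 H2; apply/eqP; rewrite eqEcard H1 H2. Qed.

Lemma closure_small s t : pinjective s -> pinjective t -> SM s -> SM t -> inOR (pmcomp s t).
Proof.
move=> Is It [rs ds1 ds2 ts] [rt dt1 dt2 tt].
have Ic := pinj_comp Is It.
have r1 := rk_comp_r s t; have r2 := rk_comp_l Is It.
apply: SM_inOR => //; split.
- exact: leq_trans r1 rt.
- exact: disj_sub (dom_comp_sub s t) dt1.
- exact: disj_sub (img_comp_sub s t) ds2.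
move=> e.
have ert : rk t = m by move: r1 rt; rewrite e; lia.
have ers : rk s = m by move: r2 rs; rewrite e; lia.
have Ed : dom (pmcomp s t) = dom t.
  by apply: sub_eq_card; [exact: dom_comp_sub | rewrite -/(rk t) -/(rk (pmcomp s t)) ert e].
have Ei : img (pmcomp s t) = img s.
  by apply: sub_eq_card; [exact: img_comp_sub | rewrite !card_img // ers e].
have Ets : img t = dom s.
  have c1 : #|img t :&: dom s| = m by rewrite -card_pimage // -img_comp card_img.
  have E1 : img t :&: dom s = img t.
    by apply: sub_eq_card; [exact: subsetIl | rewrite c1 card_img // ert].
  have E2 : img t :&: dom s = dom s.
    by apply: sub_eq_card; [exact: subsetIr | rewrite c1 -/(rk s) ers].
  by rewrite -E1 E2.
by rewrite Ed Ei (tt ert) Ets (ts ers).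
Qed.

Lemma closure s t : 0 < m -> inOR s -> inOR t -> inOR (pmcomp s t).
Proof.
move=> m0 Hs Ht.
have [Is [Ws|Ss]] := inOR_cases m0 Hs; first exact: closure_W'l.
have [It [Wt|St]] := inOR_cases m0 Ht; last exact: closure_small.
have Ic := pinj_comp Is It.
rewrite -(pinvK Ic) pinv_comp //; apply: inOR_pinv => //.
apply: closure_W'l => //; first exact: W'_pinv.
exact: inOR_pinv.
Qed.

Lemma tp_comp s t : 0 < m -> inOR s -> inOR t -> rk (pmcomp s t) = m ->
  (rk t = m -> tp (pmcomp s t) = tp t) /\ (rk s = m -> tp (pmcomp s t) = tp s).
Proof.
move=> m0 Hs Ht e.
have [Is _] := inOR_cases m0 Hs; have [It _] := inOR_cases m0 Ht.
have Ic := pinj_comp Is It.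
split => e'.
  rewrite /tp; congr typeI; apply: sub_eq_card; first exact: dom_comp_sub.
  by rewrite -/(rk t) -/(rk (pmcomp s t)) e' e.
have [_ [Wc|[_ _ _ tc]]] := inOR_cases m0 (closure m0 Hs Ht).
  by move: e; rewrite W_rk ?(W'_W Wc) //; lia.
have [_ [Ws|[_ _ _ ts]]] := inOR_cases m0 Hs.
  by move: e'; rewrite W_rk ?(W'_W Ws) //; lia.
have Ei : img (pmcomp s t) = img s.
  by apply: sub_eq_card; [exact: img_comp_sub | rewrite !card_img // e' e].
by rewrite /tp (tc e) Ei (ts e').
Qed.


Definition mk (A B : {set 'I_n}) : pmapo m :=
  [ffun i => if i \in A then Some (nth i (enum B) (index i (enum A))) else None].

Lemma mk_props (A B : {set 'I_n}) : #|A| <= #|B| ->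
  [/\ dom (mk A B) = A, pinjective (mk A B) & img (mk A B) \subset B].
Proof.
move=> cAB.
have ix : forall i, i \in A -> index i (enum A) < size (enum B).
  by move=> i Hi; rewrite -cardE (leq_trans _ cAB) // cardE index_mem mem_enum.
split.
- by apply/setP => i; rewrite in_dom ffunE; case: (i \in A).
- apply/pinjP => i j k; rewrite !ffunE.
  case Hi: (i \in A) => //; case Hj: (j \in A) => // -[<-] [].
  rewrite (set_nth_default i j) ?ix // => /eqP.
  rewrite nth_uniq ?ix ?enum_uniq // => /eqP E.
  by rewrite -(nth_index i (s := enum A) (x := i)) ?mem_enum // -E nth_index ?mem_enum.
- apply/subsetP => k /pimageP [i _]; rewrite ffunE; case Hi: (i \in A) => // -[<-].
  by rewrite -mem_enum mem_nth ?ix.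
Qed.

End Aux.

Unset Implicit Arguments.
Theorem proposition3p1 (m : nat) (hm : 1 <= m) (sigma : pmapo m) :
  inOR sigma ->
  (forall tau : pmapo m,
     (exists2 rho, inOR rho & tau = pmcomp sigma rho) <->
     (inOR tau /\ img tau \subset img sigma)) /\
  (forall tau : pmapo m,
     (exists2 rho, inOR rho & tau = pmcomp rho sigma) <->
     (inOR tau /\ dom tau \subset dom sigma)) /\
  (forall tau : pmapo m,
     (exists rho1 rho2, [/\ inOR rho1, inOR rho2 &
                           tau = pmcomp (pmcomp rho1 sigma) rho2]) <->
     (inOR tau /\
      (if rk sigma != m then rk tau <= rk sigma
       else (rk tau < m) || ((rk tau == m) && (tp tau == tp sigma))))).
Proof.
move=> Hs.
have [Is Cs] := inOR_cases hm Hs.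
have Hii : forall tau : pmapo m,
     (exists2 rho, inOR rho & tau = pmcomp rho sigma) <->
     (inOR tau /\ dom tau \subset dom sigma).
  move=> tau; split.
  - by case=> rho Hr ->; split; [exact: closure | exact: dom_comp_sub].
  - case=> Ht sub; exists (pmcomp tau (pinv sigma)).
      by apply: closure => //; exact: inOR_pinv.
    apply/ffunP => i; rewrite !pmcompE.
    case E: (sigma i) => [j|].
      by rewrite pmcompE; have /(pinvP _ _ Is) -> := E.
    case Et: (tau i) => [k|] //.
    have : i \in dom tau by rewrite in_dom Et.
    by move/(subsetP sub); rewrite in_dom E.
split.
  move=> tau; split.
  - by case=> rho Hr ->; split; [exact: closure | exact: img_comp_sub].
  - case=> Ht sub; exists (pmcomp (pinv sigma) tau).
      by apply: closure => //; exact: inOR_pinv.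
    apply/ffunP => i; rewrite !pmcompE.
    case E: (tau i) => [k|] //.
    have : k \in img sigma by apply/(subsetP sub)/pimageP; exists i.
    rewrite -dom_pinv in_dom; case E2: (pinv sigma k) => [j|] // _.
    by move/(pinvP _ _ Is): E2 => ->.
split => // tau; split.
- case=> r1 [r2 [H1 H2 ->]].
  have [I1 _] := inOR_cases hm H1; have [I2 _] := inOR_cases hm H2.
  have Ia := pinj_comp I1 Is.
  have Ha := closure hm H1 Hs.
  split; first exact: closure.
  have ra := rk_comp_r r1 sigma.
  have rt := rk_comp_l Ia I2.
  case: ifP => [_ | /negbFE /eqP es]; first exact: leq_trans rt ra.
  case: (ltngtP (rk (pmcomp (pmcomp r1 sigma) r2)) m) => // et.
    by move: rt ra; rewrite es; lia.
  have ea : rk (pmcomp r1 sigma) = m by move: rt ra; rewrite et es; lia.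
  have [_ T1] := tp_comp hm Ha H2 et.
  have [T2 _] := tp_comp hm H1 Hs ea.
  by rewrite /= (T1 ea) (T2 es) eqxx.
- case=> Ht C.
  case: Cs => [Ws | Ss].
    have /Hii [rho Hr E] : inOR tau /\ dom tau \subset dom sigma.
      by split => //; apply/subsetP => i _; rewrite W_dom ?(W'_W Ws) // in_setT.
    exists rho, (@idm m); split => //; first exact/W'_inOR/idm_W'.
    by rewrite comp_idm.
  have [rs ds1 ds2 ts] := Ss.
  have rts : rk tau <= rk sigma.
    by move: C; case: ifP => // /negbFE /eqP ->; case/orP => [/ltnW // | /andP [/eqP -> _]].
  have [It Ct] := inOR_cases hm Ht.
  have [Wt | St] := Ct.
    by move: rts; rewrite W_rk ?(W'_W Wt) //; lia.
  have [rt dt1 dt2 tt] := St.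
  have [Dr Ir Sr] := mk_props rts.
  set r2 := mk (dom tau) (dom sigma).
  have Hr2 : inOR r2.
    apply: SM_inOR => //; split.
    - by rewrite /rk Dr.
    - by rewrite Dr.
    - exact: disj_sub Sr ds1.
    - rewrite /rk Dr -/(rk tau) => e.
      have es : rk sigma = m by apply/eqP; rewrite eqn_leq rs -{1}e rts.
      have Ei : img r2 = dom sigma.
        by apply: sub_eq_card => //; rewrite card_img // /rk Dr -/(rk tau) -/(rk sigma) e es.
      move: C; rewrite es eqxx /= e ltnn eqxx /= => /eqP.
      by rewrite Ei /tp.
  exists (pmcomp (pmcomp tau (pinv r2)) (pinv sigma)), r2; split => //.
    by apply: closure => //; [apply: closure => //; exact: inOR_pinv | exact: inOR_pinv].
  apply/ffunP => i; rewrite !pmcompE.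
  case E: (r2 i) => [j|]; last first.
    have : i \notin dom r2 by rewrite in_dom E.
    by rewrite Dr in_dom negbK => /eqP.
  have : j \in dom sigma by apply/(subsetP Sr)/pimageP; exists i.
  rewrite in_dom => Hj; rewrite pmcompE; case Es: (sigma j) Hj => [k|] // _.
  rewrite !pmcompE; have /(pinvP _ _ Is) -> := Es.
  by rewrite pmcompE; have /(pinvP _ _ Ir) -> := E.
Qed.
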